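(* Let $\mathsf{L}\in\{\mathbf{PD},\mathsf{InqL},\mathbf{PT}\}$ and let $\phi(p_1,\dots,p_n)$ be a consistent formula in the language of $\mathsf L$ with variables among $p_1,\dots,p_n$. The following are equivalent: (i) $\phi\dashv\vdash_{\mathsf L}\Theta_X$ for some nonempty team $X$ on $\{p_1,\dots,p_n\}$; (ii) $\phi$ is flat; (iii) $\phi$ is $\mathcal F$-projective in $\mathsf L$, where $\mathcal F$ is the class of all flat substitutions of $\mathsf L$.
   Context: A valuation is a function from the set Prop of propositional variables to $\{0,1\}$; a team is a set of valuations; a team on $V$ is a set of functions $V\to\{0,1\}$. Formulas of $\mathbf{PT}$: $\phi::=p\mid\bot\mid\top\mid\,=\!(\phi_1,\dots,\phi_n,\phi)\mid\neg\phi\mid\phi\wedge\phi\mid\phi\otimes\phi\mid\phi\vee\phi\mid\phi\to\phi$. Satisfaction on a team $X$: $X\models p$ iff $v(p)=1$ for all $v\in X$; $X\models\bot$ iff $X=\emptyset$; $X\models\top$ always; $\wedge$ conjunction; $X\models\phi\otimes\psi$ iff $X=Y\cup Z$ with $Y\models\phi$, $Z\models\psi$; $X\models\phi\vee\psi$ iff $X\models\phi$ or $X\models\psi$; $X\models\phi\to\psi$ iff every $Y\subseteq X$ with $Y\models\phi$ satisfies $\psi$; $X\models\neg\phi$ iff $\{v\}\not\models\phi$ for all $v\in X$; $X\models\,=\!(\phi_1,\dots,\phi_n,\psi)$ iff $X\models\bigwedge_i(\phi_i\vee(\phi_i\to\bot))\to(\psi\vee(\psi\to\bot))$. $\phi$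 is flat if for all teams $X$: $X\models\phi$ iff $\{v\}\models\phi$ for all $v\in X$. Formulas of $\mathbf{PD}$: $\phi::=p\mid\bot\mid\top\mid\,=\!(\vec\alpha,\beta)\mid\neg\phi\mid\phi\wedge\phi\mid\phi\otimes\phi$ with $\vec\alpha,\beta$ flat, same clauses (for flat arguments the dependence clause says that any $v,v'\in X$ agreeing on the truth of each $\alpha_i$ on singletons agree on the truth of $\beta$). $\mathsf{InqL}$: formulas built from $p,\bot,\top$ by $\wedge,\vee,\to$ with $\neg\phi:=\phi\to\bot$. For finite $\Gamma$, $\Gamma\vdash_{\mathsf L}\phi$ iff all formulas are in the language of $\mathsf L$ and every team satisfying all of $\Gamma$ satisfies $\phi$; $\phi\dashv\vdash_{\mathsf L}\psi$ means both directions. $\phi$ is consistent if some nonempty team satisfies it. For a nonempty team $X$ on $V=\{p_1,\dots,p_n\}$, with $p^1:=p$, $p^0:=\neg p$: $\Theta_X:=\bigotimes_{v\in X}(p_1^{v(p_1)}\wedge\dots\wedge p_n^{v(p_n)})$ when $\mathsf L=\mathbf{PD}$, and $\Theta_X:=\neg\neg\bigvee_{v\in X}(p_1^{v(p_1)}\wedge\dots\wedge p_n^{v(p_n)})$ when $\mathsf L\in\{\mathsf{InqL},\mathbf{PT}\}$. A substitution of $\mathsf L$ is a map on $\mathsf L$-formulas commuting with all connectives and atoms; it is flat if each $\sigma(p)$ is flat. For a set $\mathcal S$ of substitutions, $\phi$ is $\mathcal S$-projective in $\mathsf L$ if there is $\sigma\in\mathcal S$ with $\vdash_{\mathsf L}\sigma(\phi)$,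 and $\phi,\sigma(p)\vdash_{\mathsf L}p$ and $\phi,p\vdash_{\mathsf L}\sigma(p)$ for all propositional variables $p$. *)

(* Defs.v *)
From Stdlib Require Import List.
Import ListNotations.

Definition valuation := nat -> bool.
Definition team := valuation -> Prop.

Definition subteam (Y X : team) : Prop := forall v, Y v -> X v.
Definition empty_team (X : team) : Prop := forall v, ~ X v.
Definition singleton (v : valuation) : team := fun w => w = v.

(* Formulas of PT (PD and InqL formulas are sub-languages, see [inL]).
   Dep [phi_1; ...; phi_n] phi  is  =(phi_1,...,phi_n,phi). *)
Inductive form : Type :=
| Atom : nat -> form
| Bot : form
| Top : form
| Dep : list form -> form -> form
| Neg : form -> form
| And : form -> form -> form
| Tensor : form -> form -> form
| Or : form -> form -> form
| Imp : form -> form -> form.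

Fixpoint sat (f : form) (X : team) {struct f} : Prop :=
  match f with
  | Atom p => forall v, X v -> v p = true
  | Bot => empty_team X
  | Top => True
  | Dep l c =>
      (* X |= /\_i (phi_i \/ (phi_i -> _|_)) -> (c \/ (c -> _|_)) *)
      forall Y : team, subteam Y X ->
        (fix allc (l : list form) : Prop :=
           match l with
           | nil => True
           | a :: l' =>
               (sat a Y \/ (forall Z, subteam Z Y -> sat a Z -> empty_team Z))
               /\ allc l'
           end) l ->
        (sat c Y \/ (forall Z, subteam Z Y -> sat c Z -> empty_team Z))
  | Neg a => forall v, X v -> ~ sat a (singleton v)
  | And a b => sat a X /\ sat b X
  | Tensor a b => exists Y Z : team,
      (forall v, X v <-> (Y v \/ Z v)) /\ sat a Y /\ sat b Z
  | Or a b => sat a X \/ sat b X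
  | Imp a b => forall Y : team, subteam Y X -> sat a Y -> sat b Y
  end.

Definition flat (f : form) : Prop :=
  forall X : team, sat f X <-> (forall v, X v -> sat f (singleton v)).

Definition consistent (f : form) : Prop :=
  exists X : team, (exists v, X v) /\ sat f X.

Fixpoint occurs (p : nat) (f : form) {struct f} : Prop :=
  match f with
  | Atom q => q = p
  | Bot | Top => False
  | Dep l c =>
      (fix occl (l : list form) : Prop :=
         match l with nil => False | a :: l' => occurs p a \/ occl l' end) l
      \/ occurs p c
  | Neg a => occurs p a
  | And a b | Tensor a b | Or a b | Imp a b => occurs p a \/ occurs p b
  end.

Inductive logic : Type := PD | InqL | PT.

Fixpoint inL (L : logic) (f : form) {struct f} : Prop :=
  match L with
  | PT => True
  | InqL =>
      match f with
      | Atom _ | Bot | Top => True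
      | And a b | Or a b | Imp a b => inL L a /\ inL L b
      | _ => False
      end
  | PD =>
      match f with
      | Atom _ | Bot | Top => True
      | Dep l c =>
          (fix allpd (l : list form) : Prop :=
             match l with
             | nil => True
             | a :: l' => (inL L a /\ flat a) /\ allpd l'
             end) l
          /\ (inL L c /\ flat c)
      | Neg a => inL L a
      | And a b | Tensor a b => inL L a /\ inL L b
      | _ => False
      end
  end.

Definition entails (L : logic) (Gamma : list form) (f : form) : Prop :=
  (forall g, In g Gamma -> inL L g) /\ inL L f /\
  forall X : team, (forall g, In g Gamma -> sat g X) -> sat f X.

Definition equivL (L : logic) (f g : form) : Prop :=
  entails L [f] g /\ entails L [g] f.

Definition negL (L : logic) (f : form) : form :=
  match L with InqL => Imp f Bot | _ => Neg f end.

Fixpoint bigAnd (l : list form) : form :=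
  match l with nil => Top | [a] => a | a :: l' => And a (bigAnd l') end.
Fixpoint bigOr (l : list form) : form :=
  match l with nil => Bot | [a] => a | a :: l' => Or a (bigOr l') end.
Fixpoint bigTensor (l : list form) : form :=
  match l with nil => Bot | [a] => a | a :: l' => Tensor a (bigTensor l') end.

Definition literal (L : logic) (p : nat) (b : bool) : form :=
  if b then Atom p else negL L (Atom p).

Definition charform (L : logic) (ps : list nat) (v : valuation) : form :=
  bigAnd (map (fun p => literal L p (v p)) ps).

(* Theta_X for a nonempty team X on {p_1..p_n}, the team being given by a
   (nonempty) list of valuations, only their values on ps being relevant. *)
Definition Theta (L : logic) (ps : list nat) (X : list valuation) : form :=
  match L with
  | PD => bigTensor (map (charform L ps) X)
  | _ => negL L (negL L (bigOr (map (charform L ps) X)))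
  end.

Fixpoint subst (s : nat -> form) (f : form) {struct f} : form :=
  match f with
  | Atom p => s p
  | Bot => Bot
  | Top => Top
  | Dep l c => Dep (map (subst s) l) (subst s c)
  | Neg a => Neg (subst s a)
  | And a b => And (subst s a) (subst s b)
  | Tensor a b => Tensor (subst s a) (subst s b)
  | Or a b => Or (subst s a) (subst s b)
  | Imp a b => Imp (subst s a) (subst s b)
  end.

Definition substitution_of (L : logic) (s : nat -> form) : Prop :=
  forall f, inL L f -> inL L (subst s f).

Definition flat_substitution (L : logic) (s : nat -> form) : Prop :=
  substitution_of L s /\ forall p, flat (s p).

Definition flat_projective (L : logic) (f : form) : Prop :=
  exists s, flat_substitution L s /\
    entails L [] (subst s f) /\
    (forall p, entails L [f; s p] (Atom p)) /\
    (forall p, entails L [f; Atom p] (s p)).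

(* Main.v *)
Require Import Defs.
From Stdlib Require Import List Classical ClassicalEpsilon ClassicalDescription FunctionalExtensionality PropExtensionality Arith.
Import ListNotations.

Lemma teq_eq (X Y : team) : (forall v, X v <-> Y v) -> X = Y.
Proof. intro H; apply functional_extensionality; intro v; apply propositional_extensionality; auto. Qed.

Definition depc (a : form) (Y : team) : Prop :=
  sat a Y \/ (forall Z, subteam Z Y -> sat a Z -> empty_team Z).

Lemma sat_Dep l c X : sat (Dep l c) X <-> forall Y, subteam Y X -> Forall (fun a => depc a Y) l -> depc c Y.
Proof.
  simpl. unfold depc. split; intros H Y HY HF; apply H; auto; clear H HY; induction l; simpl in *; auto.
  - inversion HF; subst. split; auto. exact (IHl H2).
  - destruct HF as [H1 H2]; constructor; auto.
Qed.

Lemma occurs_Dep p l c : occurs p (Dep l c) <-> Exists (occurs p) l \/ occurs p c.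
Proof.
  simpl. split; intros [H|H]; auto; left; induction l; simpl in *.
  - contradiction.
  - destruct H as [H|H]; [now constructor | apply Exists_cons_tl; exact (IHl H)].
  - inversion H.
  - inversion H; subst; [left; auto | right; exact (IHl H1)].
Qed.

Lemma inL_PD_Dep l c : inL PD (Dep l c) <-> Forall (fun a => inL PD a /\ flat a) l /\ (inL PD c /\ flat c).
Proof.
  simpl. split; intros [H1 H2]; split; auto; clear H2; induction l; simpl in *; auto.
  - destruct H1 as [H1 H2]; constructor; auto.
  - inversion H1; subst. split; auto. exact (IHl H3).
Qed.

Definition form_ind' (P : form -> Prop)
  (HA : forall n, P (Atom n)) (HB : P Bot) (HT : P Top)
  (HD : forall l c, Forall P l -> P c -> P (Dep l c))
  (HN : forall a, P a -> P (Neg a))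
  (HAn : forall a b, P a -> P b -> P (And a b))
  (HTe : forall a b, P a -> P b -> P (Tensor a b))
  (HO : forall a b, P a -> P b -> P (Or a b))
  (HI : forall a b, P a -> P b -> P (Imp a b)) : forall f, P f :=
  fix F f := match f with
  | Atom n => HA n | Bot => HB | Top => HT
  | Dep l c => HD l c ((fix G l := match l return Forall P l with
       | nil => Forall_nil P | a :: l' => Forall_cons a (F a) (G l') end) l) (F c)
  | Neg a => HN a (F a)
  | And a b => HAn a b (F a) (F b)
  | Tensor a b => HTe a b (F a) (F b)
  | Or a b => HO a b (F a) (F b)
  | Imp a b => HI a b (F a) (F b)
  end.

Lemma downward f : forall X Y, sat f X -> subteam Y X -> sat f Y.
Proof.
  induction f; simpl; intros X Y H HY; unfold subteam, empty_team in *.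
  - intros v Hv; exact (H v (HY v Hv)).
  - intros v Hv; exact (H v (HY v Hv)).
  - auto.
  - intros Y' HY'; apply H; unfold subteam in *; eauto.
  - intros v Hv; exact (H v (HY v Hv)).
  - destruct H; eauto.
  - destruct H as (Y1 & Z1 & HU & H1 & H2).
    exists (fun v => Y v /\ Y1 v), (fun v => Y v /\ Z1 v); split; [|split].
    + intro v; split; [intro Hv; destruct (proj1 (HU v) (HY v Hv)); auto | intros [[]|[]]; auto].
    + apply (IHf1 Y1); auto; intros v []; auto.
    + apply (IHf2 Z1); auto; intros v []; auto.
  - destruct H; eauto.
  - intros Y' HY'; apply H; unfold subteam in *; eauto.
Qed.

Definition charac (f : form) (P : valuation -> Prop) : Prop :=
  forall Y, sat f Y <-> forall v, Y v -> P v.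

Lemma charac_single f P v : charac f P -> (sat f (singleton v) <-> P v).
Proof.
  intro H; rewrite (H _); unfold singleton; split; intro H'; [apply H'; reflexivity| intros w ->; auto].
Qed.

Lemma charac_flat f P : charac f P -> flat f.
Proof.
  intros H X; rewrite (H _); split; intros H' v Hv; [rewrite (charac_single _ _ _ H)|rewrite <- (charac_single _ _ _ H)]; auto.
Qed.

Lemma flat_charac f : flat f -> charac f (fun v => sat f (singleton v)).
Proof. intros H Y; apply H. Qed.

Lemma charac_ext f P Q : charac f P -> (forall v, P v <-> Q v) -> charac f Q.
Proof. intros H E Y; rewrite (H _); split; intros H' v Hv; apply E; auto. Qed.

Lemma charac_Atom p : charac (Atom p) (fun v => v p = true).
Proof. intro Y; simpl; tauto. Qed.

Lemma charac_And a b P Q : charac a P -> charac b Q -> charac (And a b) (fun v => P v /\ Q v).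
Proof. intros Ha Hb Y; simpl; rewrite (Ha _), (Hb _); firstorder. Qed.

Lemma charac_Neg a : charac (Neg a) (fun v => ~ sat a (singleton v)).
Proof. intro Y; simpl; tauto. Qed.

Lemma charac_Imp a b P Q : charac a P -> charac b Q -> charac (Imp a b) (fun v => P v -> Q v).
Proof.
  intros Ha Hb Y; simpl; split.
  - intros H v Hv Pv. rewrite <- (charac_single _ _ _ Hb). apply H.
    + intros w ->; auto.
    + apply (charac_single _ _ _ Ha); auto.
  - intros H Z HZ Hz. rewrite (Ha _) in Hz; rewrite (Hb _); intros v Hv; apply H; auto.
Qed.

Lemma charac_Tensor a b P Q : charac a P -> charac b Q -> charac (Tensor a b) (fun v => P v \/ Q v).
Proof.
  intros Ha Hb Y; simpl; split.
  - intros (Y1 & Z1 & HU & H1 & H2) v Hv. rewrite (Ha _) in H1; rewrite (Hb _) in H2.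
    destruct (proj1 (HU v) Hv); auto.
  - intros H. exists (fun v => Y v /\ P v), (fun v => Y v /\ ~ P v). split; [|split].
    + intro v; split; [intro Hv; destruct (classic (P v)); auto| intros [[]|[]]; auto].
    + rewrite (Ha _); intros v []; auto.
    + rewrite (Hb _); intros v [Hv Hn]; destruct (H v Hv); tauto.
Qed.

Lemma charac_ImpBot a Q : (forall v, sat a (singleton v) <-> Q v) -> charac (Imp a Bot) (fun v => ~ Q v).
Proof.
  intros Ha Y; simpl; split.
  - intros H v Hv Qv. refine (H (singleton v) _ _ v eq_refl); [intros w ->; auto | apply Ha; auto].
  - intros H Z HZ Hz u Hu. apply (H u (HZ u Hu)). apply Ha.
    apply (downward a Z); auto. intros w ->; auto.
Qed.

Lemma sat_bigOr_map {A} (F : A -> form) xs Y : xs <> [] ->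
  (sat (bigOr (map F xs)) Y <-> exists x, In x xs /\ sat (F x) Y).
Proof.
  intro Hne; induction xs as [|x xs IH]; [congruence|].
  destruct xs as [|y xs].
  - simpl; split; [eauto| intros (z & [->|[]] & H); auto].
  - change (sat (Or (F x) (bigOr (map F (y :: xs)))) Y <-> exists z, In z (x :: y :: xs) /\ sat (F z) Y).
    simpl sat; rewrite IH by congruence. split.
    + intros [H|(z & Hz & H)]; [exists x; simpl; auto | exists z; split; auto; right; auto].
    + intros (z & [->|Hz] & H); auto. right; eauto.
Qed.

Lemma charac_bigAnd_map {A} (F : A -> form) (P : A -> valuation -> Prop) xs :
  (forall x, In x xs -> charac (F x) (P x)) ->
  charac (bigAnd (map F xs)) (fun v => forall x, In x xs -> P x v).
Proof.
  intro H; induction xs as [|x xs IH].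
  - intro Y; simpl; split; auto; intros; contradiction.
  - destruct xs as [|y xs].
    + apply charac_ext with (P x); [apply H; simpl; auto|].
      intro v; split; [intros Hv z [->|[]]; auto| intro Hv; apply Hv; simpl; auto].
    + change (charac (And (F x) (bigAnd (map F (y :: xs)))) (fun v => forall z, In z (x :: y :: xs) -> P z v)).
      eapply charac_ext; [apply charac_And; [apply H; simpl; auto| apply IH; intros; apply H; simpl; auto]|].
      intro v; split; [intros [H1 H2] z [->|Hz]; auto| intro Hv; split; intros; apply Hv; simpl; auto].
Qed.

Lemma charac_bigTensor_map {A} (F : A -> form) (P : A -> valuation -> Prop) xs : xs <> [] ->
  (forall x, In x xs -> charac (F x) (P x)) ->
  charac (bigTensor (map F xs)) (fun v => exists x, In x xs /\ P x v).
Proof.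
  intros Hne H; induction xs as [|x xs IH]; [congruence|].
  destruct xs as [|y xs].
  - apply charac_ext with (P x); [apply H; simpl; auto|].
    intro v; split; [intros Hv; exists x; simpl; auto| intros (z & [->|[]] & Hz); auto].
  - change (charac (Tensor (F x) (bigTensor (map F (y :: xs)))) (fun v => exists z, In z (x :: y :: xs) /\ P z v)).
    eapply charac_ext; [apply charac_Tensor; [apply H; simpl; auto| apply IH; [congruence| intros; apply H; simpl; auto]]|].
    intro v; split.
    + intros [Hv|(z & Hz & Hv)]; [exists x; simpl; auto| exists z; simpl; auto].
    + intros (z & [->|Hz] & Hv); auto. right; eauto.
Qed.

Lemma charac_literal L p b : charac (literal L p b) (fun v => v p = b).
Proof.
  destruct b; simpl.
  - apply charac_Atom.
  - destruct L; simpl.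
    + eapply charac_ext; [apply charac_Neg|]. intro v; cbv beta; rewrite (charac_single _ _ _ (charac_Atom p)).
      destruct (v p); intuition congruence.
    + eapply charac_ext; [apply charac_ImpBot with (Q := fun v => v p = true); intro v; apply (charac_single _ _ _ (charac_Atom p))|].
      intro v; cbv beta; destruct (v p); intuition congruence.
    + eapply charac_ext; [apply charac_Neg|]. intro v; cbv beta; rewrite (charac_single _ _ _ (charac_Atom p)).
      destruct (v p); intuition congruence.
Qed.

Definition agree (ps : list nat) (v w : valuation) : Prop := forall q, In q ps -> v q = w q.

Lemma charac_charform L ps w : charac (charform L ps w) (fun v => agree ps v w).
Proof.
  unfold charform. eapply charac_ext.
  - apply charac_bigAnd_map with (P := fun p v => v p = w p). intros; apply charac_literal.
  - intro v; unfold agree; tauto.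
Qed.

Lemma charac_Theta L ps Xl : Xl <> [] ->
  charac (Theta L ps Xl) (fun v => exists w, In w Xl /\ agree ps v w).
Proof.
  intro Hne.
  assert (HB : forall L u, sat (bigOr (map (charform L ps) Xl)) (singleton u) <-> exists w, In w Xl /\ agree ps u w).
  { intros L0 u. rewrite sat_bigOr_map by auto. split; intros (w & Hw & H); exists w; split; auto;
      [apply (charac_single _ _ _ (charac_charform L0 ps w)) | apply (charac_single _ _ _ (charac_charform L0 ps w))]; auto. }
  destruct L; simpl.
  - apply charac_bigTensor_map; auto. intros; apply charac_charform.
  - eapply charac_ext.
    + apply charac_ImpBot with (Q := fun v => ~ exists w, In w Xl /\ agree ps v w).
      intro v. apply (charac_single _ _ _ (charac_ImpBot _ _ (HB InqL))).
    + intro v; split; [apply NNPP| tauto].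
  - eapply charac_ext; [apply charac_Neg|]. intro v.
    cbv beta; rewrite (charac_single _ _ _ (charac_Neg _)).
    rewrite HB. split; [apply NNPP| tauto].
Qed.

Lemma inL_PT f : inL PT f.
Proof. destruct f; simpl; auto. Qed.

Lemma inL_literal L p b : inL L (literal L p b).
Proof. destruct b, L; simpl; auto. Qed.

Lemma inL_bigAnd_map {A} L (F : A -> form) xs : (forall x, inL L (F x)) -> inL L (bigAnd (map F xs)).
Proof.
  intro H; destruct L; [| |apply inL_PT]; induction xs as [|x xs IH]; simpl; auto;
  destruct xs; simpl in *; auto.
Qed.

Lemma inL_charform L ps w : inL L (charform L ps w).
Proof. apply inL_bigAnd_map; intros; apply inL_literal. Qed.

Lemma inL_Theta L ps Xl : inL L (Theta L ps Xl).
Proof.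
  destruct L; simpl; [| |exact I].
  - induction Xl as [|x xs IH]; simpl; auto. destruct xs; simpl in *; auto using inL_charform.
  - split; auto. split; auto. induction Xl as [|x xs IH]; simpl; auto. destruct xs; simpl in *; auto using inL_charform.
Qed.

Definition img (g : valuation -> valuation) (X : team) : team := fun u => exists v, X v /\ u = g v.
Definition pre (g : valuation -> valuation) (X Y : team) : team := fun v => X v /\ Y (g v).

Lemma img_pre g X Y : subteam Y (img g X) -> img g (pre g X Y) = Y.
Proof.
  intro H; apply teq_eq; intro u; split.
  - intros (v & [Xv Yv] & ->); auto.
  - intro Yu; destruct (H u Yu) as (v & Xv & ->). exists v; split; [split|]; auto.
Qed.

Lemma img_sub g X Y : subteam Y X -> subteam (img g Y) (img g X).
Proof. intros H u (v & Yv & ->); exists v; auto. Qed.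

Lemma img_single g v : img g (singleton v) = singleton (g v).
Proof.
  apply teq_eq; intro u; unfold img, singleton; split; [intros (w & -> & ->); auto| intros ->; eauto].
Qed.

Lemma depc_img s g a : (forall X, sat (subst s a) X <-> sat a (img g X)) ->
  forall Y, depc (subst s a) Y <-> depc a (img g Y).
Proof.
  intros IH Y; unfold depc; rewrite IH; split; intros [H|H]; auto; right.
  - intros Z' HZ' Hz u Zu. rewrite <- (img_pre g Y Z') in Zu, Hz by auto.
    destruct Zu as (v & Zv & ->). refine (H _ _ _ v Zv).
    + intros w []; auto.
    + apply IH; auto.
  - intros Z HZ Hz v Zv. refine (H (img g Z) _ _ (g v) _); [apply img_sub; auto| apply IH; auto| exists v; auto].
Qed.

Lemma subst_img s g f : (forall p, occurs p f -> flat (s p) /\ forall v, (sat (s p) (singleton v) <-> g v p = true)) ->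
  forall X, sat (subst s f) X <-> sat f (img g X).
Proof.
  induction f using form_ind'; intros Hocc X.
  - simpl. destruct (Hocc n eq_refl) as [Hf Hs]. rewrite (Hf X). split.
    + intros H u (v & Xv & ->). apply Hs; auto.
    + intros H v Xv. apply Hs; apply H; exists v; auto.
  - simpl; unfold empty_team, img; split.
    + intros H u (v & Xv & _); exact (H v Xv).
    + intros H v Xv; apply (H (g v)); eauto.
  - simpl; tauto.
  - rename f into c. assert (Hl : Forall (fun a => forall Y, depc (subst s a) Y <-> depc a (img g Y)) l).
    { rewrite Forall_forall in *; intros a Ha. apply depc_img. apply H; auto.
      intros p Hp; apply Hocc; apply occurs_Dep; left; apply Exists_exists; eauto. }
    assert (Hc : forall Y, depc (subst s c) Y <-> depc c (img g Y)).
    { apply depc_img; apply IHf; intros p Hp; apply Hocc; apply occurs_Dep; auto. }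
    simpl subst. rewrite !sat_Dep. split.
    + intros H' Y' HY' HF. rewrite <- (img_pre g X Y') in * by auto.
      apply Hc. apply H'; [intros v []; auto|].
      rewrite Forall_map. rewrite Forall_forall in *. intros a Ha; apply Hl; auto.
    + intros H' Y HY HF. apply Hc. apply H'; [apply img_sub; auto|].
      rewrite Forall_map in HF. rewrite Forall_forall in *. intros a Ha; apply Hl; auto.
  - simpl. split.
    + intros H u (v & Xv & ->). rewrite <- img_single, <- IHf; auto.
    + intros H v Xv. rewrite IHf, img_single; [apply H; exists v; auto|].
      intros p Hp; apply Hocc; auto.
  - simpl. rewrite IHf1, IHf2; [tauto| |]; intros p Hp; apply Hocc; simpl; auto.
  - simpl. split.
    + intros (Y & Z & HU & H1 & H2). exists (img g Y), (img g Z). split; [|split].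
      * intro u; split.
        -- intros (v & Xv & ->). destruct (proj1 (HU v) Xv); [left|right]; exists v; auto.
        -- intros [(v & Yv & ->)|(v & Zv & ->)]; exists v; split; auto; apply HU; auto.
      * apply IHf1; auto; intros p Hp; apply Hocc; simpl; auto.
      * apply IHf2; auto; intros p Hp; apply Hocc; simpl; auto.
    + intros (Y' & Z' & HU & H1 & H2). exists (pre g X Y'), (pre g X Z'). split; [|split].
      * intro v; split.
        -- intro Xv. assert (img g X (g v)) as Hi by (exists v; auto).
           destruct (proj1 (HU _) Hi); [left|right]; split; auto.
        -- intros [[]|[]]; auto.
      * apply IHf1; [intros p Hp; apply Hocc; simpl; auto|]. rewrite img_pre; auto.
        intros u Hu; apply HU; auto.
      * apply IHf2; [intros p Hp; apply Hocc; simpl; auto|]. rewrite img_pre; auto.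
        intros u Hu; apply HU; auto.
  - simpl. rewrite IHf1, IHf2; [tauto| |]; intros p Hp; apply Hocc; simpl; auto.
  - simpl. split.
    + intros H Y' HY' Ha. rewrite <- (img_pre g X Y') in * by auto.
      apply IHf2; [intros p Hp; apply Hocc; simpl; auto|].
      apply H; [intros v []; auto|]. apply IHf1; auto. intros p Hp; apply Hocc; simpl; auto.
    + intros H Y HY Ha. apply IHf2; [intros p Hp; apply Hocc; simpl; auto|].
      apply H; [apply img_sub; auto|]. apply IHf1; auto. intros p Hp; apply Hocc; simpl; auto.
Qed.

Lemma subst_id f : subst Atom f = f.
Proof.
  induction f using form_ind'; simpl; f_equal; auto.
  induction H; simpl; f_equal; auto.
Qed.

Lemma locality ps f v v' : (forall p, occurs p f -> In p ps) -> agree ps v v' ->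
  (sat f (singleton v) <-> sat f (singleton v')).
Proof.
  intros Hocc Hag.
  set (g := fun (u : valuation) (p : nat) => if in_dec Nat.eq_dec p ps then u p else v' p).
  assert (Hg : g v = v').
  { apply functional_extensionality; intro p; unfold g. destruct (in_dec Nat.eq_dec p ps); auto. }
  rewrite <- (subst_id f) at 1. rewrite (subst_img Atom g f), img_single, Hg; [tauto|].
  intros p Hp; split; [apply (charac_flat _ _ (charac_Atom p))|].
  intro u. rewrite (charac_single _ _ _ (charac_Atom p)). unfold g.
  destruct (in_dec Nat.eq_dec p ps) as [|n]; [tauto| destruct (n (Hocc p Hp))].
Qed.

Definition gs (s : nat -> form) (v : valuation) : valuation :=
  fun p => if excluded_middle_informative (sat (s p) (singleton v)) then true else false.

Lemma gs_spec s v p : gs s v p = true <-> sat (s p) (singleton v).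
Proof. unfold gs; destruct excluded_middle_informative; split; auto; congruence. Qed.

Lemma subst_img_gs s f : (forall p, flat (s p)) -> forall X, sat (subst s f) X <-> sat f (img (gs s) X).
Proof. intros Hs; apply subst_img; intros p _; split; auto; intro v; rewrite gs_spec; tauto. Qed.

Lemma subst_flat s a : (forall p, flat (s p)) -> flat a -> flat (subst s a).
Proof.
  intros Hs Ha X. rewrite (subst_img_gs s a Hs X), (Ha _). split.
  - intros H v Xv. rewrite subst_img_gs, img_single by auto. apply H; exists v; auto.
  - intros H u (v & Xv & ->). rewrite <- img_single, <- subst_img_gs by auto. auto.
Qed.

Lemma subst_inL L s : (forall p, inL L (s p)) -> (forall p, flat (s p)) -> forall f, inL L f -> inL L (subst s f).
Proof.
  intros Hi Hf. destruct L.
  - induction f using form_ind'; intros Hin; try (simpl in *; auto; tauto).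
    rename f into c. simpl subst. rewrite inL_PD_Dep in *. destruct Hin as [Hl [Hc Hcf]].
    split; [|split; [auto| apply subst_flat; auto]].
    rewrite Forall_map. rewrite Forall_forall in *. intros a Ha. destruct (Hl a Ha); split; auto.
    apply subst_flat; auto.
  - induction f; simpl; intros Hin; auto; tauto.
  - intros; apply inL_PT.
Qed.

Definition upd (w : valuation) (p : nat) (b : bool) : valuation := fun q => if Nat.eqb q p then b else w q.

Fixpoint vals (ps : list nat) : list valuation :=
  match ps with
  | [] => [fun _ => false]
  | p :: ps' => flat_map (fun w => [upd w p true; upd w p false]) (vals ps')
  end.

Lemma vals_spec ps v : exists w, In w (vals ps) /\ agree ps v w.
Proof.
  induction ps as [|p ps IH]; simpl.
  - exists (fun _ => false); split; auto. intros q [].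
  - destruct IH as (w & Hw & Ha). exists (upd w p (v p)). split.
    + apply in_flat_map. exists w; split; auto. destruct (v p); simpl; auto.
    + intros q [->|Hq]; unfold upd.
      * rewrite Nat.eqb_refl; auto.
      * destruct (Nat.eqb_spec q p) as [->|]; auto.
Qed.

Lemma ent1 L a b : entails L [a] b -> forall X, sat a X -> sat b X.
Proof. intros (_ & _ & H) X Ha; apply H; intros g [<-|[]]; auto. Qed.

Lemma ent2 L a b c : entails L [a; b] c -> forall X, sat a X -> sat b X -> sat c X.
Proof. intros (_ & _ & H) X Ha Hb; apply H; intros g [<-|[<-|[]]]; auto. Qed.

Lemma inL_Atom L p : inL L (Atom p).
Proof. destruct L; simpl; auto. Qed.

Theorem lemma4p6 (L : logic) (ps : list nat) (phi : form) :
  inL L phi ->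
  (forall p, occurs p phi -> In p ps) ->
  consistent phi ->
  ((exists X : list valuation, X <> [] /\ equivL L phi (Theta L ps X)) <-> flat phi)
  /\ (flat phi <-> flat_projective L phi).
Proof.
  intros Hin Hocc Hcons.
  assert (Hsing : forall X v, sat phi X -> X v -> sat phi (singleton v)).
  { intros X v H Xv; apply (downward phi X); auto; intros u ->; auto. }
  split; split.
  -
    intros (Xl & Hne & [E1 E2]).
    assert (E : forall Y, sat phi Y <-> sat (Theta L ps Xl) Y) by (intro Y; split; [apply (ent1 _ _ _ E1)|apply (ent1 _ _ _ E2)]).
    pose proof (charac_flat _ _ (charac_Theta L ps Xl Hne)) as HT.
    intro X. rewrite E, (HT X). split; intros H v Xv; [rewrite E|rewrite <- E]; auto.
  -
    intro Hflat.
    set (Xl := filter (fun w => if excluded_middle_informative (sat phi (singleton w)) then true else false) (vals ps)).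
    assert (Key : forall v, sat phi (singleton v) <-> exists w, In w Xl /\ agree ps v w).
    { intro v; split.
      - intro Hv. destruct (vals_spec ps v) as (w & Hw & Ha). exists w; split; auto.
        apply filter_In; split; auto. destruct excluded_middle_informative as [|n]; auto.
        exfalso; apply n. apply (locality ps phi v w); auto.
      - intros (w & Hw & Ha). apply filter_In in Hw. destruct Hw as [_ Hw].
        destruct excluded_middle_informative as [Hs|]; [|discriminate].
        apply (locality ps phi w v); auto. intros q Hq; symmetry; auto. }
    destruct Hcons as (X & (v & Xv) & HX).
    assert (Hne : Xl <> []).
    { destruct (proj1 (Key v) (Hsing X v HX Xv)) as (w & Hw & _). intro E; rewrite E in Hw; destruct Hw. }
    exists Xl; split; auto.
    pose proof (charac_Theta L ps Xl Hne) as HT.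
    split; (split; [intros g [<-|[]]; auto using inL_Theta| split; [auto using inL_Theta|]]).
    + intros Y HY. specialize (HY phi (or_introl eq_refl)).
      apply HT. intros u Yu. apply Key. apply (Hsing Y); auto.
    + intros Y HY. specialize (HY _ (or_introl eq_refl)).
      apply Hflat. intros u Yu. apply Key. exact (proj1 (HT Y) HY u Yu).
  -
    intro Hflat.
    destruct Hcons as (X0 & (w & Xw) & HX0).
    pose proof (Hsing X0 w HX0 Xw) as Hw.
    pose proof (flat_charac phi Hflat) as Hphi.
    set (Pp := fun v => sat phi (singleton v)) in *.
    set (sig := fun p => if w p then (match L with PD => Tensor (Neg phi) (Atom p) | _ => Imp phi (Atom p) end) else And phi (Atom p)).
    assert (Hsig : forall p, charac (sig p) (fun v => if w p then (Pp v -> v p = true) else (Pp v /\ v p = true))).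
    { intro p; unfold sig; destruct (w p).
      - destruct L.
        + eapply charac_ext; [apply (charac_Tensor _ _ _ _ (charac_Neg phi) (charac_Atom p))|].
          intro v; cbv beta; unfold Pp; destruct (classic (sat phi (singleton v))); tauto.
        + apply (charac_Imp _ _ _ _ Hphi (charac_Atom p)).
        + apply (charac_Imp _ _ _ _ Hphi (charac_Atom p)).
      - apply (charac_And _ _ _ _ Hphi (charac_Atom p)). }
    assert (Hsin : forall p, inL L (sig p)).
    { intro p; unfold sig; destruct (w p), L; simpl; auto. }
    assert (Hsf : forall p, flat (sig p)) by (intro p; exact (charac_flat _ _ (Hsig p))).
    assert (Hg1 : forall v, Pp v -> gs sig v = v).
    { intros v Hv; apply functional_extensionality; intro p.
      pose proof (gs_spec sig v p) as G. rewrite (charac_single _ _ _ (Hsig p)) in G.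
      destruct (w p), (gs sig v p), (v p); intuition congruence. }
    assert (Hg2 : forall v, ~ Pp v -> gs sig v = w).
    { intros v Hv; apply functional_extensionality; intro p.
      pose proof (gs_spec sig v p) as G. rewrite (charac_single _ _ _ (Hsig p)) in G.
      destruct (w p), (gs sig v p); intuition congruence. }
    exists sig. split; [split; [intros f Hf; apply subst_inL; auto| auto]|].
    split; [|split].
    + split; [intros g []|split; [apply subst_inL; auto|]].
      intros X _. rewrite subst_img_gs by auto. apply (proj2 (Hphi _)).
      intros u (v & Xv & ->). destruct (classic (Pp v)) as [H|H]; [rewrite Hg1|rewrite Hg2]; auto.
    + intro p. split; [intros g [<-|[<-|[]]]; auto| split; [apply inL_Atom|]].
      intros X HX. pose proof (HX phi (or_introl eq_refl)) as H1. pose proof (HX (sig p) (or_intror (or_introl eq_refl))) as H2.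
      pose proof (proj1 (Hphi X) H1) as H1'; clear H1; rename H1' into H1. pose proof (proj1 (Hsig p X) H2) as H2'; clear H2; rename H2' into H2. apply (proj2 (charac_Atom p X)).
      intros v Xv. specialize (H1 v Xv). specialize (H2 v Xv). destruct (w p); tauto.
    + intro p. split; [intros g [<-|[<-|[]]]; auto using inL_Atom| split; [auto|]].
      intros X HX. pose proof (HX phi (or_introl eq_refl)) as H1. pose proof (HX (Atom p) (or_intror (or_introl eq_refl))) as H2.
      pose proof (proj1 (Hphi X) H1) as H1'; clear H1; rename H1' into H1. pose proof (proj1 (charac_Atom p X) H2) as H2'; clear H2; rename H2' into H2. apply (proj2 (Hsig p X)).
      intros v Xv. specialize (H1 v Xv). specialize (H2 v Xv). destruct (w p); tauto.
  -
    intros (s & [Hsub Hsf] & [_ [_ Htop]] & Hp1 & Hp2).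
    intro X; split; [intros H v Xv; apply (Hsing X); auto|].
    intro H.
    assert (HS := Htop X (fun g (Hg : In g []) => False_ind _ Hg)).
    rewrite subst_img_gs in HS by auto.
    replace (img (gs s) X) with X in HS; auto.
    apply teq_eq; intro u; split.
    + intro Xu. exists u; split; auto.
      apply functional_extensionality; intro p. symmetry.
      pose proof (gs_spec s u p) as G.
      pose proof (ent2 _ _ _ _ (Hp1 p) (singleton u) (H u Xu)) as E1.
      pose proof (ent2 _ _ _ _ (Hp2 p) (singleton u) (H u Xu)) as E2.
      rewrite (charac_single _ _ _ (charac_Atom p)) in E1, E2.
      destruct (gs s u p), (u p); intuition congruence.
    + intros (v & Xv & ->).
      replace (gs s v) with v; auto.
      apply functional_extensionality; intro p.
      pose proof (gs_spec s v p) as G.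
      pose proof (ent2 _ _ _ _ (Hp1 p) (singleton v) (H v Xv)) as E1.
      pose proof (ent2 _ _ _ _ (Hp2 p) (singleton v) (H v Xv)) as E2.
      rewrite (charac_single _ _ _ (charac_Atom p)) in E1, E2.
      destruct (gs s v p), (v p); intuition congruence.
Qed.
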